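(* Let $d\geq 2$ and let $\rho$ be a diagonal symmetric (DS) state acting on $\mathbb{C}^d\otimes\mathbb{C}^d$, with associated matrix $M(\rho)$. Then $\rho$ is PPT (i.e. its partial transpose $\rho^{T_B}$ is positive semidefinite) if and only if $M(\rho)$ is doubly non-negative.
   Context: Let $\{\ket{0},\dots,\ket{d-1}\}$ be the computational basis of $\mathbb{C}^d$. Define $\ket{D_{ii}}=\ket{ii}$ and, for $i<j$, $\ket{D_{ij}}=(\ket{ij}+\ket{ji})/\sqrt{2}$. A state $\rho$ on $\mathbb{C}^d\otimes\mathbb{C}^d$ is diagonal symmetric (DS) if $\rho=\sum_{0\le i\le j<d}p_{ij}\ket{D_{ij}}\bra{D_{ij}}$ with $p_{ij}\ge 0$ and $\sum_{i\le j}p_{ij}=1$; set $p_{ji}=p_{ij}$. Its associated matrix $M(\rho)$ is the real symmetric $d\times d$ matrix with $M(\rho)_{ii}=p_{ii}$ and $M(\rho)_{ij}=p_{ij}/2$ for $i\ne j$. The partial transpose $\rho^{T_B}$ is taken with respect to the computational basis of the second factor. A real symmetric matrix $A$ is doubly non-negative if $A\succeq 0$ and all its entries are non-negative. *)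

(* Defs.v *)
From HB Require Import structures.
From mathcomp Require Import all_boot all_order all_algebra.
From mathcomp Require Import complex.
Set Implicit Arguments. Unset Strict Implicit. Unset Printing Implicit Defensive.
Import Order.TTheory GRing.Theory Num.Theory.
Local Open Scope ring_scope.

(* Positive semidefinite complex matrix: Hermitian and v^* A v >= 0 for all v
   (in a numClosedFieldType, 0 <= z means z is real and nonnegative). *)
Definition psdC (C : numClosedFieldType) (n : nat) (A : 'M[C]_n) : Prop :=
  (map_mx Num.conj A)^T = A /\
  forall v : 'cV[C]_n, 0 <= ((map_mx Num.conj v)^T *m A *m v) 0 0.

Definition psdR (R : realFieldType) (n : nat) (A : 'M[R]_n) : Prop :=
  A^T = A /\ forall v : 'cV[R]_n, 0 <= (v^T *m A *m v) 0 0.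

Definition doubly_nonneg (R : realFieldType) (n : nat) (A : 'M[R]_n) : Prop :=
  psdR A /\ forall i j, 0 <= A i j.

Definition ket2 (C : nzRingType) (d : nat) (i j : 'I_d) : 'cV[C]_(d * d) :=
  delta_mx (mxvec_index i j) 0.

Definition Dket (R : rcfType) (d : nat) (i j : 'I_d) : 'cV[complex R]_(d * d) :=
  if i == j then ket2 _ i i
  else ((Num.sqrt (2 : R))^-1)%:C%C *: (ket2 _ i j + ket2 _ j i).

Definition DSstate (R : rcfType) (d : nat) (p : 'I_d -> 'I_d -> R)
  : 'M[complex R]_(d * d) :=
  \sum_(i < d) \sum_(j < d | (i <= j)%N)
     (p i j)%:C%C *: (@Dket R d i j *m (map_mx Num.conj (@Dket R d i j))^T).

(* Partial transpose on the second factor, w.r.t. the computational basis: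
   <i l| A^{T_B} |k j> = <i j| A |k l>. *)
Definition ptB (C : nzRingType) (d : nat) (A : 'M[C]_(d * d)) : 'M[C]_(d * d) :=
  \sum_(i < d) \sum_(j < d) \sum_(k < d) \sum_(l < d)
     A (mxvec_index i j) (mxvec_index k l) *:
       delta_mx (mxvec_index i l) (mxvec_index k j).

Definition Mmat (R : rcfType) (d : nat) (p : 'I_d -> 'I_d -> R) : 'M[R]_d :=
  \matrix_(i, j) (if i == j then p i i else p i j / 2).

(* Main.v *)
Require Import Defs.
From HB Require Import structures.
From mathcomp Require Import all_boot all_order all_algebra.
From mathcomp Require Import complex.
From mathcomp Require Import ring.
Import Order.TTheory GRing.Theory Num.Theory.
Local Open Scope ring_scope.

Lemma eq_mi d (a b c e : 'I_d) :
  (mxvec_index a b == mxvec_index c e) = (a == c) && (b == e).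
Proof.
by rewrite /mxvec_index (inj_eq (@cast_ord_inj _ _ _)) (inj_eq enum_rank_inj).
Qed.

Lemma sum_pick {V : nmodType} {d} (i : 'I_d) (F : 'I_d -> V) :
  (forall k, i != k -> F k = 0) -> \sum_k F k = F i.
Proof.
move=> H; rewrite (bigD1 i) //= big1 ?addr0 // => k; rewrite eq_sym; exact: H.
Qed.

Lemma quadE (Rg : comPzRingType) n (u v : 'cV[Rg]_n) (A : 'M_n) :
  (u^T *m A *m v) 0 0 = \sum_i \sum_j u i 0 * A i j * v j 0.
Proof.
rewrite mxE; under eq_bigr do rewrite mxE big_distrl.
rewrite exchange_big; apply eq_bigr => i _; apply eq_bigr => j _.
by rewrite !mxE.
Qed.

Lemma triang (V : zmodType) d (f : 'I_d -> 'I_d -> V) :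
  \sum_(i < d) \sum_(j < d | (i <= j)%N) (if i == j then f i i else f i j + f j i)
  = \sum_(i < d) \sum_(j < d) f i j.
Proof.
have E : forall i j : 'I_d, (i <= j)%N -> (if i == j then f i i else f i j + f j i)
   = f i j + (if (i < j)%N then f j i else 0).
  move=> i j le; case: eqVneq => [->|ne]; first by rewrite ltnn addr0.
  by rewrite ltn_neqAle le andbT -[val i == val j]/(i == j) ne.
rewrite (eq_bigr (fun i : 'I_d => \sum_(j < d | (i <= j)%N) f i j +
   \sum_(j < d | (i <= j)%N) (if (i < j)%N then f j i else 0))); last first.
  by move=> i _; rewrite -big_split; apply eq_bigr => j; exact: E.
rewrite big_split /=.
have -> : \sum_(i < d) \sum_(j < d | (i <= j)%N) (if (i < j)%N then f j i else 0)
   = \sum_(i < d) \sum_(j < d | (j < i)%N) f i j.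
  under eq_bigr do rewrite big_mkcond /=.
  rewrite exchange_big /=; apply eq_bigr => i _; rewrite [RHS]big_mkcond /=.
  apply eq_bigr => j _; case: ltnP => h; last by case: ifP.
  by rewrite ltnW.
rewrite -big_split /=; apply eq_bigr => i _.
rewrite [in RHS](bigID (fun j : 'I_d => (i <= j)%N)) /=.
by congr (_ + _); apply eq_bigl => j; rewrite ltnNge.
Qed.


Section S.
Variable C : nzRingType.
Variable d : nat.
Local Notation mi := (@mxvec_index d d).

Lemma ptBE (A : 'M[C]_(d * d)) a b c e :
  ptB A (mi a b) (mi c e) = A (mi a e) (mi c b).
Proof.
rewrite /ptB summxE (sum_pick a) => [|i ne].
  rewrite summxE (sum_pick e) => [|j ne].
    rewrite summxE (sum_pick c) => [|k ne].
      rewrite summxE (sum_pick b) => [|l ne].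
        by rewrite !mxE !eq_mi !eqxx mulr1.
      by rewrite !mxE !eq_mi (negPf ne) andbF mulr0.
    by rewrite summxE big1 // => l _; rewrite !mxE !eq_mi (negPf ne) /= ?andbF ?mulr0.
  rewrite summxE big1 // => k _; rewrite summxE big1 // => l _.
  by rewrite !mxE !eq_mi (negPf ne) /= ?andbF ?mulr0.
rewrite summxE big1 // => j _; rewrite summxE big1 // => k _.
rewrite summxE big1 // => l _.
by rewrite !mxE !eq_mi (negPf ne) /= ?andbF ?mulr0.
Qed.

Lemma ptB_delta i j k l :
  ptB (delta_mx (mi i j) (mi k l)) = delta_mx (mi i l) (mi k j) :> 'M[C]_(d*d).
Proof.
apply/matrixP => x y.
case/mxvec_indexP: x => a b; case/mxvec_indexP: y => c e.
rewrite ptBE !mxE !eq_mi.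
by case: (a == i); case: (e == j); case: (c == k); case: (b == l).
Qed.

Lemma ptBD (A B : 'M[C]_(d*d)) : ptB (A + B) = ptB A + ptB B.
Proof.
apply/matrixP => x y.
case/mxvec_indexP: x => a b; case/mxvec_indexP: y => c e.
by rewrite !mxE !ptBE !mxE.
Qed.

Lemma ptB0 : ptB (0 : 'M[C]_(d*d)) = 0.
Proof.
apply/matrixP => x y.
case/mxvec_indexP: x => a b; case/mxvec_indexP: y => c e.
by rewrite !mxE !ptBE !mxE.
Qed.

Lemma ptBZ (s : C) (A : 'M[C]_(d*d)) : ptB (s *: A) = s *: ptB A.
Proof.
apply/matrixP => x y.
case/mxvec_indexP: x => a b; case/mxvec_indexP: y => c e.
by rewrite !mxE !ptBE !mxE.
Qed.

Lemma ptB_sum I (r : seq I) (P : pred I) (F : I -> 'M[C]_(d*d)) :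
  ptB (\sum_(x <- r | P x) F x) = \sum_(x <- r | P x) ptB (F x).
Proof. exact: (big_morph _ ptBD ptB0). Qed.
End S.


Section S3.
Variable R : rcfType.
Variable d : nat.
Local Notation C := (complex R).
Local Notation mi := (@mxvec_index d d).
Local Notation dl x y := (delta_mx x y : 'M[C]_(d*d)).

Lemma conjR (x : R) : Num.conj (x%:C)%C = (x%:C)%C.
Proof. exact: conjc_real. Qed.

Lemma conj_delta m n (x : 'I_m) (y : 'I_n) :
  map_mx Num.conj (delta_mx x y : 'M[C]_(m, n)) = delta_mx x y.
Proof. by apply/matrixP => a b; rewrite !mxE rmorph_nat. Qed.

Lemma conj_Dket (i j : 'I_d) : map_mx Num.conj (Dket R i j) = Dket R i j.
Proof.
rewrite /Dket /ket2; case: eqP => _; first exact: conj_delta.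
rewrite map_mxZ map_mxD !conj_delta; congr (_ *: _); exact: conjR.
Qed.

Lemma outer_ket (x y : 'I_(d*d)) :
  delta_mx x 0 *m (delta_mx y 0 : 'cV[C]_(d*d))^T = dl x y.
Proof. by rewrite trmx_delta mul_delta_mx. Qed.

Lemma Dket_outer (i j : 'I_d) :
  Dket R i j *m (map_mx Num.conj (Dket R i j))^T =
  if i == j then dl (mi i i) (mi i i)
  else ((1/2 : R)%:C)%C *: (dl (mi i j) (mi i j) + dl (mi i j) (mi j i)
          + dl (mi j i) (mi i j) + dl (mi j i) (mi j i)).
Proof.
rewrite conj_Dket /Dket /ket2; case: eqP => [->|_]; first exact: outer_ket.
rewrite linearZ /= -scalemxAl -scalemxAr scalerA.
rewrite linearD /= mulmxDl !mulmxDr !outer_ket.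
congr (_ *: _); first last.
  by rewrite !addrA.
rewrite -rmorphM /=; congr (_ %:C)%C.
rewrite -invrM ?unitf_gt0 ?sqrtr_gt0 ?ltr0n // -expr2 sqr_sqrtr ?ler0n //.
by rewrite div1r.
Qed.

End S3.


Section S4.
Variable R : rcfType.
Variable d : nat.
Variable p : 'I_d -> 'I_d -> R.
Hypothesis hsym : forall i j, p j i = p i j.
Local Notation C := (complex R).
Local Notation mi := (@mxvec_index d d).
Local Notation dl x y := (delta_mx x y : 'M[C]_(d*d)).

Definition q (i j : 'I_d) : C := ((Mmat p i j)%:C)%C.
Definition f (i j : 'I_d) : 'M[C]_(d*d) :=
  q i j *: dl (mi i i) (mi j j) + (if i == j then 0 else q i j *: dl (mi i j) (mi i j)).

Lemma T_decomp : ptB (DSstate p) = \sum_(i < d) \sum_(j < d) f i j.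
Proof.
rewrite /DSstate ptB_sum; under eq_bigr do rewrite ptB_sum.
rewrite -triang; apply eq_bigr => i _; apply eq_bigr => j _.
rewrite ptBZ Dket_outer /f /q !mxE; case: eqP => [<-|ne].
  by rewrite eqxx ptB_delta addr0.
have ne' : (j == i) = false by apply/eqP => h; apply: ne; rewrite h.
rewrite ne' hsym.
rewrite ptBZ !ptBD !ptB_delta scalerA -rmorphM /= mul1r.
rewrite !scalerDr !addrA; congr (_ + _ + _); exact: addrC.
Qed.

End S4.


Section S5.
Variable R : rcfType.
Variable d : nat.
Variable p : 'I_d -> 'I_d -> R.
Hypothesis hsym : forall i j, p j i = p i j.
Local Notation C := (complex R).
Local Notation mi := (@mxvec_index d d).
Local Notation qq := (@q R d p).
Local Notation ff := (@f R d p).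
Local Notation dl x y := (delta_mx x y : 'M[C]_(d*d)).

Lemma Msym i j : Mmat p j i = Mmat p i j.
Proof. by rewrite !mxE eq_sym; case: eqP => [->|_] //; rewrite hsym. Qed.

Lemma qsym i j : qq j i = qq i j.
Proof. by rewrite /q Msym. Qed.

Definition qf (w : 'cV[C]_(d*d)) (A : 'M[C]_(d*d)) :=
  ((map_mx Num.conj w)^T *m A *m w) 0 0.

Lemma qfD w A B : qf w (A + B) = qf w A + qf w B.
Proof. by rewrite /qf mulmxDr mulmxDl mxE. Qed.
Lemma qf0 w : qf w 0 = 0.
Proof. by rewrite /qf mulmx0 mul0mx mxE. Qed.
Lemma qfZ w s A : qf w (s *: A) = s * qf w A.
Proof. by rewrite /qf -scalemxAr -scalemxAl mxE. Qed.
Lemma qf_sum w I (r : seq I) (P : pred I) (F : I -> 'M[C]_(d*d)) :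
  qf w (\sum_(x <- r | P x) F x) = \sum_(x <- r | P x) qf w (F x).
Proof. exact: (big_morph _ (qfD w) (qf0 w)). Qed.

Lemma qf_delta w x y : qf w (dl x y) = Num.conj (w x 0) * w y 0.
Proof.
rewrite /qf quadE (sum_pick x) => [|a ne].
  rewrite (sum_pick y) => [|b ne].
    by rewrite !mxE !eqxx mulr1.
  by rewrite eq_sym in ne; rewrite !mxE eqxx (negPf ne) mulr0 mul0r.
by rewrite eq_sym in ne; rewrite big1 // => b _; rewrite !mxE (negPf ne) mulr0 mul0r.
Qed.

Lemma qf_T w : qf w (ptB (DSstate p)) =
  \sum_(i < d) \sum_(j < d) (qq i j * (Num.conj (w (mi i i) 0) * w (mi j j) 0)
     + (if i == j then 0 else qq i j * (Num.conj (w (mi i j) 0) * w (mi i j) 0))).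
Proof.
rewrite (@T_decomp R d p hsym) qf_sum; apply eq_bigr => i _; rewrite qf_sum.
apply eq_bigr => j _; rewrite /f qfD !qfZ !qf_delta.
by case: (i == j); rewrite ?qf0 ?qfZ ?qf_delta.
Qed.

Lemma map_mx_sum' I (r : seq I) (P : pred I) (F : I -> 'M[C]_(d*d)) :
  map_mx Num.conj (\sum_(x <- r | P x) F x) = \sum_(x <- r | P x) map_mx Num.conj (F x).
Proof. exact: map_mx_sum. Qed.

Lemma T_herm : (map_mx Num.conj (ptB (DSstate p)))^T = ptB (DSstate p).
Proof.
rewrite (@T_decomp R d p hsym) map_mx_sum' linear_sum /=.
under eq_bigr do rewrite map_mx_sum' linear_sum /=.
have E : forall i j, (map_mx Num.conj (ff i j))^T =
   qq i j *: dl (mi j j) (mi i i)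
   + (if i == j then 0 else qq i j *: dl (mi i j) (mi i j)).
  move=> i j; rewrite /f map_mxD linearD /= map_mxZ conj_delta linearZ /= trmx_delta.
  rewrite /q conjR; congr (_ + _); case: eqP => _.
    by rewrite map_mx0 linear0.
  by rewrite map_mxZ conj_delta linearZ /= trmx_delta conjR.
under eq_bigr do under eq_bigr do rewrite E.
under eq_bigr do rewrite big_split /=.
rewrite big_split /= exchange_big /=.
rewrite [RHS](eq_bigr (fun i : 'I_d => \sum_(j < d) qq i j *: dl (mi i i) (mi j j) +
   \sum_(j < d) (if i == j then 0 else qq i j *: dl (mi i j) (mi i j)))); last first.
  by move=> i _; rewrite -big_split.
rewrite big_split /=; congr (_ + _).
by apply eq_bigr => i _; apply eq_bigr => j _; rewrite qsym.
Qed.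

End S5.


Lemma cid (R : rcfType) (m a b c e : R) :
  ((m%:C * (Num.conj (a +i* b) * (c +i* e))) = (m*(a*c + b*e))%:C + 'i * (m*(a*e - b*c))%:C)%C.
Proof. simpc. congr (Complex _ _); ring. Qed.

Lemma ceta (R : rcfType) (z : complex R) : z = (complex.Re z +i* complex.Im z)%C.
Proof. by case: z. Qed.

Lemma sumC (R : rcfType) n (F : 'I_n -> R) :
  \sum_(i < n) ((F i)%:C)%C = ((\sum_(i < n) F i)%:C)%C.
Proof. by rewrite rmorph_sum. Qed.

Theorem theorem2 (R : rcfType) (d : nat) (p : 'I_d -> 'I_d -> R)
  (hd : (2 <= d)%N)
  (hsym : forall i j, p j i = p i j)
  (hnn : forall i j, 0 <= p i j)
  (hsum : \sum_(i < d) \sum_(j < d | (i <= j)%N) p i j = 1) :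
  psdC (ptB (DSstate p)) <-> doubly_nonneg (Mmat p).
Proof.
have Mnn : forall i j, 0 <= Mmat p i j.
  by move=> i j; rewrite mxE; case: eqP => _; rewrite ?divr_ge0 ?ler0n.
split.
  move=> [_ H]; split => //; split.
    by apply/matrixP => i j; rewrite mxE; exact: (@Msym R d p hsym).
  move=> v.
  pose w := \sum_(a < d) ((v a 0)%:C)%C *: (delta_mx (mxvec_index a a) 0 : 'cV[complex R]_(d*d)).
  have wE : forall i j, w (mxvec_index i j) 0 = if i == j then ((v i 0)%:C)%C else 0.
    move=> i j; rewrite summxE (sum_pick i) => [|a ne].
      by rewrite !mxE eq_mi eqxx eq_sym; case: eqP => _; rewrite ?mulr1 ?mulr0.
    by rewrite !mxE eq_mi (negPf ne) mulr0.
  have := H w; rewrite -[X in 0 <= X]/(@qf R d w _) (@qf_T R d p hsym).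
  rewrite quadE -ler0c rmorph_sum /=; congr (0 <= _); apply eq_bigr => i _.
  rewrite rmorph_sum /=; apply eq_bigr => j _.
  rewrite !wE !eqxx conjR /q.
  case: eqP => [<-|_]; rewrite ?eqxx ?rmorph0 ?mulr0 ?mul0r addr0 -!rmorphM /=;
    congr (_%:C)%C; ring.
move=> [[Msy Hpsd] _]; split; first exact: (@T_herm R d p hsym).
move=> w; rewrite -[X in 0 <= X]/(@qf R d w _) (@qf_T R d p hsym).
under eq_bigr do rewrite big_split /=.
rewrite big_split /=; apply addr_ge0; last first.
  apply sumr_ge0 => i _; apply sumr_ge0 => j _; case: (i == j) => //.
  by apply mulr_ge0; [rewrite /q ler0c | rewrite mulrC mul_conjC_ge0].
pose x := \col_(i < d) complex.Re (w (mxvec_index i i) 0).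
pose y := \col_(i < d) complex.Im (w (mxvec_index i i) 0).
have E : forall i j, @q R d p i j * (Num.conj (w (mxvec_index i i) 0) * w (mxvec_index j j) 0)
   = (Mmat p i j * (x i 0 * x j 0 + y i 0 * y j 0))%:C%C
     + 'i%C * (Mmat p i j * (x i 0 * y j 0 - y i 0 * x j 0))%:C%C.
  move=> i j; rewrite /q (@ceta R (w (mxvec_index i i) 0)) (@ceta R (w (mxvec_index j j) 0)).
  by rewrite cid !mxE.
under eq_bigr do under eq_bigr do rewrite E.
under eq_bigr do rewrite big_split /= -mulr_sumr.
rewrite big_split /= -mulr_sumr.
under eq_bigr do rewrite sumC.
under [X in _ + _ * X]eq_bigr do rewrite sumC.
rewrite !sumC.
have -> : \sum_(i < d) \sum_(j < d) Mmat p i j * (x i 0 * y j 0 - y i 0 * x j 0) = 0.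
  have -> : \sum_(i < d) \sum_(j < d) Mmat p i j * (x i 0 * y j 0 - y i 0 * x j 0)
     = \sum_(i < d) \sum_(j < d) (Mmat p i j * x i 0 * y j 0)
       - \sum_(i < d) \sum_(j < d) (Mmat p j i * x j 0 * y i 0).
    rewrite -sumrB; apply eq_bigr => i _; rewrite -sumrB; apply eq_bigr => j _.
    rewrite (@Msym R d p hsym); ring.
  by rewrite [X in _ - X]exchange_big subrr.
rewrite rmorph0 mulr0 addr0 ler0c.
have -> : \sum_(i < d) \sum_(j < d) Mmat p i j * (x i 0 * x j 0 + y i 0 * y j 0)
   = (x^T *m Mmat p *m x) 0 0 + (y^T *m Mmat p *m y) 0 0.
  rewrite !quadE -big_split; apply eq_bigr => i _; rewrite -big_split.
  apply eq_bigr => j _; rewrite [RHS]/=; ring.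
by apply addr_ge0; apply Hpsd.
Qed.
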